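(* Fix a flow monoid $\mathbb{M}$. The set $\mathit{FG}$ of all flow graphs over $\mathbb{M}$, with the partial composition $*$, forms a separation algebra with unit set $\{h_\emptyset\}$, where $h_\emptyset=(\emptyset,\emptyset,\emptyset)$. That is, $*$ is commutative ($h_1\# h_2$ iff $h_2\# h_1$, and then $h_1*h_2=h_2*h_1$), associative ($h_2\# h_3$ and $h_1\#(h_2*h_3)$ hold iff $h_1\# h_2$ and $(h_1*h_2)\# h_3$ hold, and then $h_1*(h_2*h_3)=(h_1*h_2)*h_3$), and $h_\emptyset\# h$ with $h_\emptyset * h=h$ for every flow graph $h$.
   Context: A flow monoid is a commutative monoid $(\mathbb{M},+,0)$ such that the relation $n\le m :\iff \exists o.\ m=n+o$ is a partial order in which every ascending chain $K$ has a least upper bound $\bigsqcup K$, and $n+\bigsqcup K=\bigsqcup(n+K)$. A function $f:\mathbb{M}\to\mathbb{M}$ is continuous if it commutes with least upper bounds of ascending chains; $\mathcal{C}(\mathbb{M}\to\mathbb{M})$ is the set of continuous functions. Infinite sums denote least upper bounds of the ascending chain of finite partial sums; empty sums are $0$. A flow graph is a tuple $h=(X,E,\mathit{in})$ with $X\subseteq\mathbb{N}$ finite, edges $E:X\times\mathbb{N}\to\mathcal{C}(\mathbb{M}\to\mathbb{M})$, and inflow $\mathit{in}:(\mathbb{N}\setminus X)\times X\to\mathbb{M}$. Write $\mathit{in}_x=\sum_{y\in\mathbb{N}\setminus X}\mathit{in}(y,x)$. The flow $h.\mathit{flow}:X\to\mathbb{M}$ is the least function satisfying $\mathit{flow}(x)=\mathit{in}_x+\sum_{y\in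 X}E(y,x)(\mathit{flow}(y))$ for all $x\in X$. The outflow is $h.\mathit{out}:X\times(\mathbb{N}\setminus X)\to\mathbb{M}$, $h.\mathit{out}(x,y)=E(x,y)(h.\mathit{flow}(x))$. Composition: for $h_i=(X_i,E_i,\mathit{in}_i)$, write $h_1\#\#h_2$ if $X_1\cap X_2=\emptyset$ and for all $x\in X_1,y\in X_2$: $h_1.\mathit{out}(x,y)=\mathit{in}_2(x,y)$ and $h_2.\mathit{out}(y,x)=\mathit{in}_1(y,x)$. Then $h_1\uplus h_2=(X_1\uplus X_2,E_1\uplus E_2,(\mathit{in}_1\uplus\mathit{in}_2)|_{(\mathbb{N}\setminus(X_1\uplus X_2))\times(X_1\uplus X_2)})$. Composition is defined, written $h_1\# h_2$, iff $h_1\#\#h_2$ and $h_1.\mathit{flow}\uplus h_2.\mathit{flow}=(h_1\uplus h_2).\mathit{flow}$; in that case $h_1*h_2=h_1\uplus h_2$. *)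

(* Defs.v *)
From mathcomp Require Import all_boot.
From mathcomp Require Import finmap.
From Stdlib Require Import ClassicalEpsilon.

Set Implicit Arguments.
Unset Strict Implicit.
Unset Printing Implicit Defensive.

Local Open Scope fset_scope.

Section MonoidDefs.
Variables (T : Type) (add : T -> T -> T) (zero : T).

Definition mle (n m : T) : Prop := exists o, m = add n o.

Definition ascending (K : nat -> T) : Prop := forall i, mle (K i) (K i.+1).

Definition is_lub (K : nat -> T) (l : T) : Prop :=
  (forall i, mle (K i) l) /\ (forall u, (forall i, mle (K i) u) -> mle l u).

End MonoidDefs.

Record flowMonoid := FlowMonoid {
  fm_car :> Type;
  fm_add : fm_car -> fm_car -> fm_car;
  fm_zero : fm_car;
  fm_addC : forall a b, fm_add a b = fm_add b a;
  fm_addA : forall a b c, fm_add a (fm_add b c) = fm_add (fm_add a b) c;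
  fm_add0 : forall a, fm_add fm_zero a = a;
  fm_antisym : forall a b, mle fm_add a b -> mle fm_add b a -> a = b;
  fm_complete : forall K, ascending fm_add K -> exists l, is_lub fm_add K l;
  fm_addlub : forall n K l, ascending fm_add K -> is_lub fm_add K l ->
      is_lub fm_add (fun i => fm_add n (K i)) (fm_add n l)
}.

Section FlowGraphs.
Variable M : flowMonoid.

Local Notation madd := (@fm_add M).
Local Notation mzero := (fm_zero M).

Definition continuous (f : M -> M) : Prop :=
  forall (K : nat -> M) (l : M), ascending madd K -> is_lub madd K l ->
    is_lub madd (fun i => f (K i)) (f l).

Definition lub (K : nat -> M) : M :=
  epsilon (inhabits mzero) (fun l => is_lub madd K l).

Definition msum (s : seq M) : M := foldr madd mzero s.

(* ---------- Flow graphs ----------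
   A flow graph (X, E, in) with  E : X x N -> C(M -> M)  and
   in : (N \ X) x X -> M  is encoded by total functions that are
   normalised outside their domain (E x _ = 0-map for x \notin X,
   in y x = 0 unless y \notin X and x \in X). *)
Record flowGraph := FlowGraph {
  fg_X : {fset nat};
  fg_E : nat -> nat -> M -> M;
  fg_in : nat -> nat -> M;
  fg_Econt : forall x y, continuous (fg_E x y);
  fg_Eout : forall x y, x \notin fg_X -> fg_E x y = (fun _ => mzero);
  fg_inout : forall y x, (y \in fg_X) || (x \notin fg_X) -> fg_in y x = mzero
}.

(* in_x = sum_{y in N \ X} in(y, x): lub of the finite partial sums *)
Definition inflow (h : flowGraph) (x : nat) : M :=
  lub (fun n => msum [seq fg_in h y x | y <- iota 0 n & y \notin fg_X h]).

Definition flow_eq (h : flowGraph) (f : nat -> M) : Prop :=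
  forall x, x \in fg_X h ->
    f x = madd (inflow h x) (msum [seq fg_E h y x (f y) | y <- enum_fset (fg_X h)]).

Definition least_flow (h : flowGraph) (f : nat -> M) : Prop :=
  flow_eq h f /\
  (forall g, flow_eq h g -> forall x, x \in fg_X h -> mle madd (f x) (g x)).

(* h.flow : the least solution (only its values on X are meaningful) *)
Definition flow (h : flowGraph) : nat -> M :=
  epsilon (inhabits (fun _ => mzero)) (least_flow h).

(* h.out(x, y) = E(x, y)(h.flow(x)) for x in X, y notin X *)
Definition outflow (h : flowGraph) (x y : nat) : M := fg_E h x y (flow h x).

Lemma mle_refl (a : M) : mle madd a a.
Proof. by exists mzero; rewrite fm_addC fm_add0. Qed.

Lemma continuous0 : continuous (fun _ : M => mzero).
Proof.
move=> K l _ _; split=> [i|u Hu]; first exact: mle_refl.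
exact: (Hu 0%N).
Qed.

Definition fg_empty : flowGraph.
Proof.
refine (@FlowGraph fset0 (fun _ _ _ => mzero) (fun _ _ => mzero) _ _ _).
- move=> x y; exact: continuous0.
- by [].
- by [].
Defined.

Definition union_E (h1 h2 : flowGraph) (x y : nat) : M -> M :=
  if x \in fg_X h1 then fg_E h1 x y else fg_E h2 x y.

Definition union_in (h1 h2 : flowGraph) (y x : nat) : M :=
  if (y \notin fg_X h1 `|` fg_X h2) && (x \in fg_X h1 `|` fg_X h2) then
    (if x \in fg_X h1 then fg_in h1 y x else fg_in h2 y x)
  else mzero.

Definition fg_union (h1 h2 : flowGraph) : flowGraph.
Proof.
refine (@FlowGraph (fg_X h1 `|` fg_X h2) (union_E h1 h2) (union_in h1 h2) _ _ _).
- move=> x y; rewrite /union_E; case: (x \in fg_X h1); exact: fg_Econt.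
- move=> x y; rewrite in_fsetU negb_or /union_E => /andP [H1 H2].
  by rewrite (negbTE H1); apply: fg_Eout.
- move=> y x H; rewrite /union_in.
  case/orP: H => H; first by rewrite H.
  by rewrite (negbTE H) andbF.
Defined.

Definition compat (h1 h2 : flowGraph) : Prop :=
  [disjoint fg_X h1 & fg_X h2] /\
  (forall x y, x \in fg_X h1 -> y \in fg_X h2 -> outflow h1 x y = fg_in h2 x y) /\
  (forall y x, y \in fg_X h2 -> x \in fg_X h1 -> outflow h2 y x = fg_in h1 y x).

Definition composable (h1 h2 : flowGraph) : Prop :=
  compat h1 h2 /\
  (forall x, x \in fg_X h1 `|` fg_X h2 ->
     (if x \in fg_X h1 then flow h1 x else flow h2 x) = flow (fg_union h1 h2) x).

End FlowGraphs.

(* Main.v *)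
From HB Require Import structures.
From mathcomp Require Import all_boot finmap.
From Stdlib Require Import ClassicalEpsilon ProofIrrelevance FunctionalExtensionality.
Require Import Defs.
Set Implicit Arguments. Unset Strict Implicit. Unset Printing Implicit Defensive.
Local Open Scope fset_scope.

Section Aux.
Variable M : flowMonoid.
Local Notation madd := (@fm_add M).
Local Notation mzero := (fm_zero M).
Local Notation mle' := (mle madd).

Lemma addA' : associative madd. Proof. by move=> a b c; rewrite fm_addA. Qed.
Lemma addC' : commutative madd. Proof. exact: fm_addC. Qed.
Lemma add0' : left_id mzero madd. Proof. exact: fm_add0. Qed.
Lemma addr0' : right_id mzero madd. Proof. by move=> a; rewrite addC' add0'. Qed.
HB.instance Definition _ := Monoid.isComLaw.Build (fm_car M) mzero madd addA' addC' add0'.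

Lemma mle_trans a b c : mle' a b -> mle' b c -> mle' a c.
Proof. move=> [o ->] [o' ->]; exists (madd o o'); by rewrite fm_addA. Qed.
Lemma mle0 a : mle' mzero a. Proof. by exists a; rewrite add0'. Qed.
Lemma mle_addl c a b : mle' a b -> mle' (madd c a) (madd c b).
Proof. by move=> [o ->]; exists o; rewrite fm_addA. Qed.
Lemma mle_addr c a b : mle' a b -> mle' (madd a c) (madd b c).
Proof. by rewrite ![madd _ c]addC'; apply: mle_addl. Qed.
Lemma mle_add2 a b c d : mle' a b -> mle' c d -> mle' (madd a c) (madd b d).
Proof. move=> H1 H2; apply: mle_trans (mle_addr _ H1) (mle_addl _ H2). Qed.
Lemma mle_eq a b : a = b -> mle' a b. Proof. by move=> ->; apply: mle_refl. Qed.

Lemma mle_big (s : seq nat) (F G : nat -> M) :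
  (forall i, i \in s -> mle' (F i) (G i)) ->
  mle' (\big[madd/mzero]_(i <- s) F i) (\big[madd/mzero]_(i <- s) G i).
Proof.
elim: s => [|x s IH] H; first by rewrite !big_nil; apply: mle_refl.
rewrite !big_cons; apply: mle_add2; first by apply: H; rewrite inE eqxx.
by apply: IH => i Hi; apply: H; rewrite inE Hi orbT.
Qed.

Lemma msum_map (T : Type) (s : seq T) (g : T -> M) :
  msum [seq g y | y <- s] = \big[madd/mzero]_(y <- s) g y.
Proof. by elim: s => [|y s IH]; rewrite ?big_nil ?big_cons //= IH. Qed.

Lemma lub_spec K : ascending madd K -> is_lub madd K (lub K).
Proof. move=> HK; rewrite /lub; apply: epsilon_spec; exact: fm_complete. Qed.

Lemma is_lub_unique K l l' : is_lub madd K l -> is_lub madd K l' -> l = l'.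
Proof. move=> [H1 H2] [H1' H2']; apply: fm_antisym; [exact: H2|exact: H2']. Qed.

Lemma chain_mono K : ascending madd K -> forall i j, i <= j -> mle' (K i) (K j).
Proof.
move=> HK i; elim=> [|j IH]; first by rewrite leqn0 => /eqP ->; apply: mle_refl.
rewrite leq_eqVlt ltnS => /orP [/eqP ->|Hij]; first exact: mle_refl.
exact: mle_trans (IH Hij) (HK j).
Qed.

Lemma lub_shift K l : ascending madd K -> is_lub madd (fun n => K n.+1) l -> is_lub madd K l.
Proof.
move=> HK [H1 H2]; split=> [i|u Hu]; first exact: mle_trans (HK i) (H1 i).
by apply: H2 => i; apply: Hu.
Qed.

Lemma lub_eventually K N c : ascending madd K -> (forall n, N <= n -> K n = c) ->
  is_lub madd K c.
Proof.
move=> HK Hc; split=> [i|u Hu].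
  rewrite -(Hc (maxn i N)) ?leq_maxr //; apply: chain_mono => //; exact: leq_maxl.
by rewrite -(Hc N).
Qed.

Lemma asc_add K L : ascending madd K -> ascending madd L ->
  ascending madd (fun i => madd (K i) (L i)).
Proof. by move=> HK HL i; apply: mle_add2. Qed.

Lemma lub_add K L k l : ascending madd K -> ascending madd L ->
  is_lub madd K k -> is_lub madd L l -> is_lub madd (fun i => madd (K i) (L i)) (madd k l).
Proof.
move=> HK HL Hk Hl; split=> [i|u Hu]; first by apply: mle_add2; [apply: Hk.1|apply: Hl.1].
have H1 := fm_addlub k HL Hl; apply: H1.2 => j.
have H2 := fm_addlub (L j) HK Hk; rewrite addC'; apply: H2.2 => i.
rewrite addC'; apply: mle_trans (Hu (maxn i j)).
by apply: mle_add2; apply: chain_mono; rewrite ?leq_maxl ?leq_maxr.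
Qed.

Lemma lub_big (s : seq nat) (K : nat -> nat -> M) (l : nat -> M) :
  (forall y, ascending madd (K y)) -> (forall y, is_lub madd (K y) (l y)) ->
  ascending madd (fun n => \big[madd/mzero]_(y <- s) K y n) /\
  is_lub madd (fun n => \big[madd/mzero]_(y <- s) K y n) (\big[madd/mzero]_(y <- s) l y).
Proof.
move=> HK Hl; elim: s => [|x s [IH1 IH2]].
  split=> [i|]; first by rewrite !big_nil; apply: mle_refl.
  split=> [i|u Hu]; first by rewrite !big_nil; apply: mle_refl.
  by have := Hu 0; rewrite !big_nil.
rewrite big_cons.
have -> : (fun n => \big[madd/mzero]_(y <- x :: s) K y n) =
          (fun n => madd (K x n) (\big[madd/mzero]_(y <- s) K y n)).
  by apply: functional_extensionality => n; rewrite big_cons.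
split; first exact: asc_add.
exact: lub_add.
Qed.

Section Kleene.
Variable h : flowGraph M.

Definition Fh (a : nat -> M) (x : nat) : M :=
  madd (inflow h x) (\big[madd/mzero]_(y <- enum_fset (fg_X h)) fg_E h y x (a y)).

Lemma flow_eqE f : flow_eq h f <-> forall x, x \in fg_X h -> f x = Fh f x.
Proof. by rewrite /flow_eq /Fh; split=> H x Hx; rewrite H // msum_map. Qed.

Lemma E_mono x y a b : mle' a b -> mle' (fg_E h x y a) (fg_E h x y b).
Proof.
move=> Hab.
pose K := fun i : nat => if i is 0 then a else b.
have HK : ascending madd K by case=> [|i] //=; apply: mle_refl.
have Hl : is_lub madd K b.
  split=> [[|i]|u Hu] //=; first exact: mle_refl.
  exact: (Hu 1).
exact: ((fg_Econt h x y HK Hl).1 0).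
Qed.

Lemma F_mono a b : (forall y, y \in fg_X h -> mle' (a y) (b y)) ->
  forall x, mle' (Fh a x) (Fh b x).
Proof. move=> H x; apply: mle_addl; apply: mle_big => y Hy; apply: E_mono; exact: H. Qed.

Definition it n := iter n Fh (fun _ => mzero).

Lemma it_asc x : ascending madd (fun n => it n x).
Proof.
move=> n; elim: n x => [|n IH] x; first exact: mle0.
by rewrite /it /=; apply: F_mono => y _; apply: IH.
Qed.

Definition L x := lub (fun n => it n x).
Lemma L_lub x : is_lub madd (fun n => it n x) (L x).
Proof. exact: lub_spec (it_asc x). Qed.

Lemma L_fix x : Fh L x = L x.
Proof.
have Hc y : is_lub madd (fun n => fg_E h y x (it n y)) (fg_E h y x (L y)).
  exact: fg_Econt (it_asc y) (L_lub y).
have Ha y : ascending madd (fun n => fg_E h y x (it n y)).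
  by move=> n; apply: E_mono; apply: it_asc.
have [Hs1 Hs2] := lub_big (enum_fset (fg_X h)) Ha Hc.
have H := fm_addlub (inflow h x) Hs1 Hs2.
have H' : is_lub madd (fun n => it n x) (Fh L x) := lub_shift (it_asc x) H.
exact: is_lub_unique H' (L_lub x).
Qed.

Lemma L_le g : (forall x, x \in fg_X h -> mle' (Fh g x) (g x)) ->
  forall x, x \in fg_X h -> mle' (L x) (g x).
Proof.
move=> Hg.
have Hit n x : x \in fg_X h -> mle' (it n x) (g x).
  elim: n x => [|n IH] x Hx; first exact: mle0.
  apply: mle_trans (Hg x Hx); rewrite /it /=; apply: F_mono => y Hy; exact: IH.
by move=> x Hx; apply: (L_lub x).2 => n; apply: Hit.
Qed.

Lemma L_least : least_flow h L.
Proof.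
split; first by apply/flow_eqE => x _; rewrite L_fix.
move=> g /flow_eqE Hg; apply: L_le => x Hx; rewrite -Hg //; exact: mle_refl.
Qed.

Lemma flow_least : least_flow h (flow h).
Proof. rewrite /flow; apply: epsilon_spec; exists L; exact: L_least. Qed.

Lemma flow_fix x : x \in fg_X h -> flow h x = Fh (flow h) x.
Proof. by have [/flow_eqE H _] := flow_least; apply: H. Qed.

Lemma flow_le g : (forall x, x \in fg_X h -> mle' (Fh g x) (g x)) ->
  forall x, x \in fg_X h -> mle' (flow h x) (g x).
Proof.
move=> Hg x Hx; apply: mle_trans (L_le Hg Hx).
by apply: flow_least.2 => //; exact: L_least.1.
Qed.
End Kleene.

Definition psum (g : nat -> M) n := \big[madd/mzero]_(0 <= y < n) g y.
Definition isum (g : nat -> M) := lub (psum g).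

Lemma psum_asc g : ascending madd (psum g).
Proof. by move=> n; rewrite /psum big_nat_recr //; exists (g n). Qed.

Lemma isum_lub g : is_lub madd (psum g) (isum g).
Proof. exact: lub_spec (psum_asc g). Qed.

Lemma isum_add g1 g2 : isum (fun y => madd (g1 y) (g2 y)) = madd (isum g1) (isum g2).
Proof.
apply: is_lub_unique (isum_lub _) _.
have -> : psum (fun y => madd (g1 y) (g2 y)) = (fun n => madd (psum g1 n) (psum g2 n)).
  by apply: functional_extensionality => n; rewrite /psum big_split.
apply: lub_add; [exact: psum_asc|exact: psum_asc|exact: isum_lub|exact: isum_lub].
Qed.

Lemma isum_add' g g1 g2 : (forall y, g y = madd (g1 y) (g2 y)) ->
  isum g = madd (isum g1) (isum g2).
Proof.
move=> H; rewrite -isum_add; congr isum; exact: functional_extensionality.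
Qed.

Lemma isum_fin g (S : {fset nat}) : (forall y, y \notin S -> g y = mzero) ->
  isum g = \big[madd/mzero]_(y <- enum_fset S) g y.
Proof.
move=> Hg; apply: is_lub_unique (isum_lub _) _.
pose N := \max_(y <- enum_fset S) y.+1.
apply: (@lub_eventually _ N); first exact: psum_asc.
move=> n HN; rewrite /psum.
have -> : \big[madd/mzero]_(0 <= y < n) g y = \big[madd/mzero]_(0 <= y < n | y \in S) g y.
  rewrite [RHS]big_mkcond /=; apply: eq_bigr => y _; case: ifP => // /negbT; exact: Hg.
rewrite -big_filter; apply: perm_big; apply: uniq_perm.
- by rewrite filter_uniq // iota_uniq.
- exact: fset_uniq.
move=> y; rewrite mem_filter mem_iota add0n subn0 /=.
case Hy: (y \in S) => //=.
apply: leq_trans HN.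
by apply: (@leq_bigmax_seq _ _ xpredT (fun y => y.+1)).
Qed.

Lemma inflowE h x : inflow h x = isum (fun y => fg_in h y x).
Proof.
rewrite /inflow /isum; congr lub; apply: functional_extensionality => n.
rewrite msum_map big_filter /psum /index_iota subn0 [RHS](bigID (fun y => y \notin fg_X h)) /=.
rewrite [X in madd _ X]big1 ?addr0' // => y; rewrite negbK => Hy.
by apply: fg_inout; rewrite Hy.
Qed.

Lemma fg_ext (h h' : flowGraph M) : fg_X h = fg_X h' -> fg_E h = fg_E h' ->
  fg_in h = fg_in h' -> h = h'.
Proof.
case: h => X E i c1 c2 c3; case: h' => X' E' i' c1' c2' c3' /= HX HE Hi.
subst; f_equal; apply: proof_irrelevance.
Qed.

Lemma union_assoc (h1 h2 h3 : flowGraph M) :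
  fg_union h1 (fg_union h2 h3) = fg_union (fg_union h1 h2) h3.
Proof.
apply: fg_ext => /=; first by rewrite fsetUA.
  apply: functional_extensionality => x; apply: functional_extensionality => y.
  rewrite /union_E /= in_fsetU /union_E.
  by case: (x \in fg_X h1); case: (x \in fg_X h2).
apply: functional_extensionality => y; apply: functional_extensionality => x.
rewrite /union_in /= !in_fsetU /union_in /= !in_fsetU.
by case: (y \in fg_X h1); case: (y \in fg_X h2); case: (y \in fg_X h3);
   case: (x \in fg_X h1); case: (x \in fg_X h2); case: (x \in fg_X h3).
Qed.

Lemma union_comm (h1 h2 : flowGraph M) : [disjoint fg_X h1 & fg_X h2] ->
  fg_union h1 h2 = fg_union h2 h1.
Proof.
move=> /fdisjointP D.
apply: fg_ext => /=; first by rewrite fsetUC.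
  apply: functional_extensionality => x; apply: functional_extensionality => y.
  rewrite /union_E.
  case H1: (x \in fg_X h1); case H2: (x \in fg_X h2) => //.
  - by move: (D x H1); rewrite H2.
  - by rewrite !fg_Eout ?H1 ?H2.
apply: functional_extensionality => y; apply: functional_extensionality => x.
rewrite /union_in /= [fg_X h2 `|` _]fsetUC.
case: ifP => // /andP [_ Hx].
case H1: (x \in fg_X h1); case H2: (x \in fg_X h2) => //.
  by move: (D x H1); rewrite H2.
by move: Hx; rewrite in_fsetU H1 H2.
Qed.

Lemma union_unit (h : flowGraph M) : fg_union (fg_empty M) h = h.
Proof.
apply: fg_ext => /=; first by rewrite fset0U.
  by rewrite /union_E /=.
apply: functional_extensionality => y; apply: functional_extensionality => x.
rewrite /union_in /= fset0U.
case: ifP => // /negbT; rewrite negb_and negbK => H.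
by rewrite fg_inout.
Qed.

Lemma big_fU (A B : {fset nat}) (F : nat -> M) : [disjoint A & B] ->
  \big[madd/mzero]_(y <- enum_fset (A `|` B)) F y =
  madd (\big[madd/mzero]_(y <- enum_fset A) F y) (\big[madd/mzero]_(y <- enum_fset B) F y).
Proof.
move=> /fdisjointP D; rewrite -big_cat; apply: perm_big; apply: uniq_perm.
- exact: fset_uniq.
- rewrite cat_uniq !fset_uniq /= andbT; apply/hasPn => y Hy.
  by apply/negP => Hy'; move: (D y Hy'); rewrite Hy.
by move=> y; rewrite mem_cat; exact: in_fsetU.
Qed.

Lemma sumE_union (h1 h2 : flowGraph M) a x : [disjoint fg_X h1 & fg_X h2] ->
  \big[madd/mzero]_(y <- enum_fset (fg_X (fg_union h1 h2))) fg_E (fg_union h1 h2) y x (a y) =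
  madd (\big[madd/mzero]_(y <- enum_fset (fg_X h1)) fg_E h1 y x (a y))
       (\big[madd/mzero]_(y <- enum_fset (fg_X h2)) fg_E h2 y x (a y)).
Proof.
move=> D; have /fdisjointP D' := D; rewrite /= big_fU //; congr madd.
  by apply: eq_big_seq => y Hy; rewrite /union_E Hy.
apply: eq_big_seq => y Hy; rewrite /union_E.
by case: ifP => // H; move: (D' y H); rewrite Hy.
Qed.

Lemma inflow_union (h1 h2 : flowGraph M) x : [disjoint fg_X h1 & fg_X h2] ->
  x \in fg_X h1 ->
  inflow h1 x = madd (inflow (fg_union h1 h2) x)
                     (\big[madd/mzero]_(y <- enum_fset (fg_X h2)) fg_in h1 y x).
Proof.
move=> /fdisjointP D Hx.
rewrite !inflowE.
rewrite (@isum_add' _ (fun y => fg_in (fg_union h1 h2) y x)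
             (fun y => if y \in fg_X h2 then fg_in h1 y x else mzero)).
  rewrite (@isum_fin (fun y => if y \in fg_X h2 then fg_in h1 y x else mzero) (fg_X h2)); last by move=> y Hy /=; rewrite (negbTE Hy).
  by congr madd; apply: eq_big_seq => y Hy; rewrite Hy.
move=> y; rewrite /= /union_in in_fsetU Hx /=.
case Hy2: (y \in fg_X h2); first by rewrite orbT /= add0'.
rewrite orbF addr0'; case Hy1: (y \in fg_X h1) => /=.
  by rewrite fg_inout // Hy1.
by rewrite in_fsetU Hx.
Qed.

Lemma key (A B : flowGraph M) : [disjoint fg_X A & fg_X B] ->
  (forall x, x \in fg_X A -> forall y, y \in fg_X B ->
     fg_in A y x = fg_E B y x (flow (fg_union A B) y)) ->
  forall x, x \in fg_X A -> flow A x = flow (fg_union A B) x.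
Proof.
move=> D Hin.
have /fdisjointP D' := D.
have XuA x : x \in fg_X A -> x \in fg_X (fg_union A B) by move=> Hx; rewrite /= in_fsetU Hx.
have FuE a x : Fh (fg_union A B) a x = madd (inflow (fg_union A B) x)
   (madd (\big[madd/mzero]_(y <- enum_fset (fg_X A)) fg_E A y x (a y))
         (\big[madd/mzero]_(y <- enum_fset (fg_X B)) fg_E B y x (a y))).
  by rewrite /Fh sumE_union.
have Hin' x : x \in fg_X A -> inflow A x = madd (inflow (fg_union A B) x)
   (\big[madd/mzero]_(y <- enum_fset (fg_X B)) fg_E B y x (flow (fg_union A B) y)).
  move=> Hx; rewrite (inflow_union D Hx); congr madd.
  by apply: eq_big_seq => y Hy; apply: Hin.
have sol x : x \in fg_X A -> flow (fg_union A B) x = Fh A (flow (fg_union A B)) x.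
  move=> Hx; rewrite {1}(flow_fix (XuA x Hx)) FuE /Fh (Hin' x Hx).
  by rewrite -!addA' [madd (\big[madd/mzero]_(y <- enum_fset (fg_X B)) _) _]addC'.
have le1 x : x \in fg_X A -> mle' (flow A x) (flow (fg_union A B) x).
  move=> Hx; apply: (flow_le (h:=A)) Hx => y Hy; apply: mle_eq; exact: esym (sol y Hy).
pose g y := if y \in fg_X A then flow A y else flow (fg_union A B) y.
have pre x : x \in fg_X (fg_union A B) -> mle' (Fh (fg_union A B) g x) (g x).
  move=> Hx; case HxA: (x \in fg_X A).
    apply: mle_eq; rewrite FuE /g HxA (flow_fix HxA) /Fh (Hin' x HxA).
    have -> : \big[madd/mzero]_(y <- enum_fset (fg_X A))
       fg_E A y x (if y \in fg_X A then flow A y else flow (fg_union A B) y) =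
       \big[madd/mzero]_(y <- enum_fset (fg_X A)) fg_E A y x (flow A y).
      by apply: eq_big_seq => y Hy; rewrite Hy.
    have -> : \big[madd/mzero]_(y <- enum_fset (fg_X B))
       fg_E B y x (if y \in fg_X A then flow A y else flow (fg_union A B) y) =
       \big[madd/mzero]_(y <- enum_fset (fg_X B)) fg_E B y x (flow (fg_union A B) y).
      apply: eq_big_seq => y Hy; case: ifP => // HyA.
      by move: (D' y HyA); rewrite Hy.
    by rewrite -!addA' [madd (\big[madd/mzero]_(y <- enum_fset (fg_X B)) _) _]addC'.
  rewrite {2}/g HxA; apply: (mle_trans _ (mle_eq (esym (flow_fix Hx)))).
  apply: F_mono => y Hy; rewrite /g; case: ifP => HyA; last exact: mle_refl.
  exact: le1.
move=> x Hx; apply: fm_antisym; first exact: le1.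
by have := flow_le pre (XuA x Hx); rewrite /g Hx.
Qed.

Lemma assoc_fwd (h1 h2 h3 : flowGraph M) :
  composable h2 h3 -> composable h1 (fg_union h2 h3) ->
  composable h1 h2 /\ composable (fg_union h1 h2) h3.
Proof.
move=> [[D23 [O23 O32]] F23] [[D1 [O1 O1']] F1].
have /fdisjointP D23' := D23; have /fdisjointP D1' := D1.
have Eu := union_assoc h1 h2 h3.
have n12 x : x \in fg_X h1 -> x \notin fg_X h2.
  by move=> H; move: (D1' x H); rewrite /= in_fsetU negb_or => /andP [].
have n13 x : x \in fg_X h1 -> x \notin fg_X h3.
  by move=> H; move: (D1' x H); rewrite /= in_fsetU negb_or => /andP [].
have n31 x : x \in fg_X h3 -> x \notin fg_X h1.
  by move=> H; apply/negP => H1; move: (n13 x H1); rewrite H.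
have n32 x : x \in fg_X h3 -> x \notin fg_X h2.
  by move=> H; apply/negP => H1; move: (D23' x H1); rewrite H.
have f1 x : x \in fg_X h1 -> flow h1 x = flow (fg_union h1 (fg_union h2 h3)) x.
  by move=> Hx; move: (F1 x); rewrite in_fsetU Hx /= => H; exact: (H isT).
have f23 x : x \in fg_X (fg_union h2 h3) ->
    flow (fg_union h2 h3) x = flow (fg_union h1 (fg_union h2 h3)) x.
  move=> Hx; move: (F1 x); rewrite in_fsetU Hx orbT; case: ifP => [Hx1|_] H.
    by move: (D1' x Hx1); rewrite Hx.
  exact: (H isT).
have f2 x : x \in fg_X h2 -> flow h2 x = flow (fg_union h1 (fg_union h2 h3)) x.
  move=> Hx; rewrite -f23 /= ?in_fsetU ?Hx //.
  by move: (F23 x); rewrite in_fsetU Hx /= => H; exact: (H isT).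
have f3 x : x \in fg_X h3 -> flow h3 x = flow (fg_union h1 (fg_union h2 h3)) x.
  move=> Hx; rewrite -f23 /= ?in_fsetU ?Hx ?orbT //.
  move: (F23 x); rewrite in_fsetU Hx orbT (negbTE (n32 x Hx)) => H; exact: (H isT).
have Hin12 y x : y \in fg_X h3 -> x \in fg_X (fg_union h1 h2) ->
    fg_in (fg_union h1 h2) y x = fg_E h3 y x (flow (fg_union h1 (fg_union h2 h3)) y).
  move=> Hy Hx; rewrite /= /union_in Hx in_fsetU (negbTE (n31 y Hy)) (negbTE (n32 y Hy)) /=.
  case: ifP => Hx1.
    rewrite -(O1' y x _ Hx1); last by rewrite /= in_fsetU Hy orbT.
    by rewrite /outflow /= /union_E (negbTE (n32 y Hy)) f23 // /= in_fsetU Hy orbT.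
  have Hx2 : x \in fg_X h2 by move: Hx; rewrite /= in_fsetU Hx1.
  by rewrite -(O32 y x Hy Hx2) /outflow f3.
have D123 : [disjoint fg_X (fg_union h1 h2) & fg_X h3].
  apply/fdisjointP => a; rewrite /= in_fsetU => /orP [H|H]; [exact: n13|exact: D23'].
have K x : x \in fg_X (fg_union h1 h2) ->
    flow (fg_union h1 h2) x = flow (fg_union h1 (fg_union h2 h3)) x.
  move=> Hx; rewrite Eu; apply: key => // x' Hx' y Hy; rewrite -Eu; exact: Hin12.
split.
  split; first split.
  - by apply/fdisjointP => a Ha; apply: n12.
  - split.
      move=> x y Hx Hy; rewrite O1 //; last by rewrite /= in_fsetU Hy.
      by rewrite /= /union_in in_fsetU (negbTE (n12 x Hx)) (negbTE (n13 x Hx)) /= in_fsetU Hy.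
    move=> y x Hy Hx; rewrite -(O1' y x _ Hx); last by rewrite /= in_fsetU Hy.
    by rewrite /outflow /= /union_E Hy f2 // f23 // /= in_fsetU Hy.
  move=> x Hx; rewrite K //; case: ifP => H; first exact: f1.
  by apply: f2; move: Hx; rewrite in_fsetU H.
split; first split => //.
  split.
    move=> x y Hx Hy; rewrite /outflow K // /= /union_E; case: ifP => Hx1.
      rewrite -f1 //; have := O1 x y Hx1; rewrite /outflow => ->; last by rewrite /= in_fsetU Hy orbT.
      by rewrite /= /union_in in_fsetU (negbTE (n12 x Hx1)) (negbTE (n13 x Hx1)) /= in_fsetU Hy orbT /= (negbTE (n32 y Hy)).
    have Hx2 : x \in fg_X h2 by move: Hx; rewrite /= in_fsetU Hx1.
    by rewrite -f2 //; exact: O23.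
  by move=> y x Hy Hx; rewrite Hin12 // /outflow f3.
move=> x Hx; rewrite -Eu; case: ifP => H; first exact: K.
by apply: f3; move: Hx; rewrite in_fsetU H.
Qed.

Lemma composable_sym (h1 h2 : flowGraph M) : composable h1 h2 -> composable h2 h1.
Proof.
move=> [[D [O12 O21]] F]; have /fdisjointP D' := D.
split; first by split; [rewrite fdisjoint_sym | split].
move=> x Hx; rewrite -(union_comm D) -F; last by rewrite fsetUC.
case: ifP => H2; case: ifP => H1 //.
  by move: (D' x H1); rewrite H2.
by move: Hx; rewrite in_fsetU H1 H2.
Qed.

End Aux.

Theorem lemma2 (M : flowMonoid) :
  (* commutativity *)
  (forall h1 h2 : flowGraph M,
      (composable h1 h2 <-> composable h2 h1) /\
      (composable h1 h2 -> fg_union h1 h2 = fg_union h2 h1)) /\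
  (* associativity *)
  (forall h1 h2 h3 : flowGraph M,
      ((composable h2 h3 /\ composable h1 (fg_union h2 h3)) <->
       (composable h1 h2 /\ composable (fg_union h1 h2) h3)) /\
      (composable h2 h3 -> composable h1 (fg_union h2 h3) ->
       fg_union h1 (fg_union h2 h3) = fg_union (fg_union h1 h2) h3)) /\
  (* unit *)
  (forall h : flowGraph M,
      composable (fg_empty M) h /\ fg_union (fg_empty M) h = h).
Proof.
split.
  move=> h1 h2; split; first by split; apply: composable_sym.
  by move=> [[D _] _]; apply: union_comm.
split.
  move=> h1 h2 h3; split; last by move=> _ _; apply: union_assoc.
  split; first by move=> [H23 H1]; apply: assoc_fwd.
  move=> [H12 H]; have [[D12 _] _] := H12.
  have H' : composable h3 (fg_union h2 h1).
    by rewrite -(union_comm D12); apply: composable_sym.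
  have [H32 H321] := assoc_fwd (composable_sym H12) H'.
  have [[D32 _] _] := H32.
  split; first exact: composable_sym.
  by rewrite -(union_comm D32); apply: composable_sym.
move=> h; rewrite union_unit; split=> //.
split; first by split; [exact: fdisjoint0X | split => x y; rewrite in_fset0].
move=> x Hx /=; by rewrite union_unit.
Qed.
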